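(* Consider smoothed MaxSat/1-Flip on a CNF formula with $n$ variables and $m$ clauses, where each clause weight $w_i$ is drawn independently from a distribution with density $f_i:[0,1]\to[0,\phi]$, and let $B$ be the maximum number of distinct clauses in which any variable occurs. Then the expected maximum number of iterations of local search (over all initial assignments and all improving sequences) is $O(2^B n m^2\phi)$.
   Context: MaxSat/$k$-Flip: given a CNF formula with clauses $C_1,\dots,C_m$ over Boolean variables $x_1,\dots,x_n$ and clause weights $w_1,\dots,w_m$, the weight of a truth assignment is the total weight of satisfied clauses; the $k$-Flip neighbours of an assignment are those obtained by changing the truth value of at most $k$ variables; a solution is an assignment with no neighbour of strictly larger weight. Local search repeatedly moves to a strictly better neighbour. *)

(* Defs.v *)
From HB Require Import structures.
From mathcomp Require Import all_boot all_order all_algebra.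
From mathcomp Require Import all_classical all_reals all_analysis.
Set Implicit Arguments. Unset Strict Implicit. Unset Printing Implicit Defensive.
Import Order.TTheory GRing.Theory Num.Theory.
Local Open Scope classical_set_scope.
Local Open Scope ring_scope.

(* A literal over variables 'I_n: (variable, polarity); (x, true) is x,
   (x, false) is the negation of x.  A clause is a list of literals. *)
Definition literal (n : nat) := ('I_n * bool)%type.
Definition clause (n : nat) := seq (literal n).
Definition assignment (n : nat) := {ffun 'I_n -> bool}.

Definition lit_sat n (a : assignment n) (l : literal n) : bool := a l.1 == l.2.
Definition clause_sat n (a : assignment n) (c : clause n) : bool :=
  has (lit_sat a) c.

Definition weight (R : realType) n m (C : 'I_m -> clause n) (w : 'I_m -> R)
    (a : assignment n) : R :=
  \sum_(i < m | clause_sat a (C i)) w i.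

(* a' is a 1-Flip neighbour of a obtained by flipping exactly one variable
   (flipping zero variables never gives a strictly better neighbour) *)
Definition flip1 n (a a' : assignment n) : bool :=
  #|[set j | a j != a' j]| == 1%N.

Definition improving (R : realType) n m (C : 'I_m -> clause n) (w : 'I_m -> R)
    : rel (assignment n) :=
  fun a a' => flip1 a a' && (weight C w a < weight C w a').

Definition max_iterations (R : realType) n m (C : 'I_m -> clause n)
    (w : 'I_m -> R) : \bar R :=
  ereal_sup [set ((size s)%:R)%:E | s in
              [set s : seq (assignment n) |
                 exists a0 : assignment n, path (improving C w) a0 s]].

Definition max_occ n m (C : 'I_m -> clause n) : nat :=
  \max_(x < n) #|[set i : 'I_m | x \in map fst (C i)]|.

(* Expectation w.r.t. independent weights w_1,...,w_k with densities
   f_1,...,f_k on [0,1]: iterated Lebesgue integral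
   int_0^1 f_1(w_1) ... int_0^1 f_k(w_k) g(w_1,...,w_k) dw_k ... dw_1. *)
Fixpoint iter_expect (R : realType) (fs : seq (R -> R)) (g : seq R -> \bar R)
    : \bar R :=
  match fs with
  | [::] => g [::]
  | f :: fs' =>
      (\int[lebesgue_measure]_(x in `[0%R, 1%R]%classic)
         ((f x)%:E * iter_expect fs' (fun ws => g (x :: ws))))%E
  end.

Definition expected_max_iterations (R : realType) n m (C : 'I_m -> clause n)
    (f : 'I_m -> R -> R) : \bar R :=
  iter_expect [seq f i | i <- enum 'I_m]
    (fun ws => max_iterations C (fun i : 'I_m => nth 0 ws i)).

(* Main.v *)
Require Import Defs.
From HB Require Import structures.
From mathcomp Require Import all_boot all_order all_algebra.
From mathcomp Require Import all_classical all_reals all_analysis.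
From mathcomp Require Import measurable_realfun.
From mathcomp Require Import ring lra zify.
Import Order.TTheory GRing.Theory Num.Theory.

Module PA.
Local Open Scope classical_set_scope.
Local Open Scope ring_scope.

Lemma le_integral_any d (T : measurableType d) (R : realType)
  (mu : {measure set T -> \bar R}) (D : set T) (F H : T -> \bar R) :
  (forall x, D x -> (F x <= H x)%E) ->
  (\int[mu]_(x in D) F x <= \int[mu]_(x in D) H x)%E.
Proof.
move=> FH.
have FHp : {in [set: T], forall x, ((F \_ D) x <= (H \_ D) x)%E}.
  move=> x _; rewrite /patch; case: ifPn => //. rewrite inE. exact: FH.
rewrite /integral; apply: leeB; apply: le_ereal_sup => _ [h Hh <-];
  exists h => //= x; apply: (le_trans (Hh x)).
- by apply: (funepos_le FHp); rewrite inE.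
- by apply: (funeneg_le FHp); rewrite inE.
Qed.

End PA.
Import PA.

Module PB.
Local Open Scope classical_set_scope.
Local Open Scope ring_scope.

Lemma ge0E (R:realType) (r:R) : 0 <= r -> (0 <= r%:E)%E. Proof. by rewrite lee_fin. Qed.
Lemma inset01 (R:realType) (x:R) : `[0%R, 1%R]%classic x -> x \in `[(0:R), (1:R)].
Proof. by []. Qed.
Arguments ge0E {R r}.
Arguments inset01 {R x}.

Definition I1 (R : realType) (b v e x : R) : R :=
  if (0 < b + v * x) && (b + v * x < e) then 1 else 0.
Arguments I1 {R}.

Lemma I1_indic (R : realType) (b v e : R) : v = 1 \/ v = -1 ->
  exists l : R, forall x, I1 b v e x = \1_([set` `]l, l + e[%R]) x.
Proof.
move=> [->|->]; [exists (- b) | exists (b - e)] => x;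
  rewrite /I1 indicE mem_setE in_itv /=.
- have -> : (0 < b + 1 * x) && (b + 1 * x < e) = (- b < x) && (x < - b + e).
    by apply/andP/andP => -[h1 h2]; split; lra.
  by case: (_ && _).
- have -> : (0 < b + -1 * x) && (b + -1 * x < e) = (b - e < x) && (x < b - e + e).
    by apply/andP/andP => -[h1 h2]; split; lra.
  by case: (_ && _).
Qed.

Arguments I1_indic {R}.

Lemma int_indic_le (R : realType) (l e c : R) : 0 <= c -> 0 <= e ->
  (\int[lebesgue_measure]_(x in `[0%R, 1%R]%classic)
     (c * \1_([set` `]l, l + e[%R]) x)%:E <= (c * e)%:E)%E.
Proof.
move=> c0 e0.
under eq_integral => x _ do rewrite EFinM.
rewrite ge0_integralZl_EFin //; last first.
  by apply/measurable_EFinP; apply: measurable_indic; exact: measurable_itv.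
rewrite integral_indic; [|exact: measurable_itv|exact: measurable_itv].
rewrite EFinM; apply: lee_wpmul2l; first by rewrite lee_fin.
apply: le_trans; first by apply: measureIl; exact: measurable_itv.
have := lebesgue_measure_itv `]l, (l + e)%R[; rewrite /= => ->; case: ifPn => _; last by rewrite lee_fin.
by rewrite -EFinD lee_fin addrAC subrr add0r.
Qed.

Arguments int_indic_le {R}.

Section OneDim.
Variables (R : realType) (f : R -> R) (phi K : R).
Hypothesis mf : measurable_fun `[(0:R), (1:R)]%classic f.
Hypothesis fb : forall x, x \in `[(0:R), (1:R)] -> 0 <= f x <= phi.
Hypothesis f1 : (\int[lebesgue_measure]_(x in `[0%R, 1%R]%classic) (f x)%:E = 1)%E.
Hypothesis K0 : 0 <= K.
Variables (I : Type) (P : pred I) (a bb vv ee : I -> R).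
Hypothesis hq : forall q, P q -> 0 <= a q /\ 0 <= ee q /\ (vv q = 1 \/ vv q = -1).

Definition Fs (s : seq I) (x : R) : R :=
  f x * K + \sum_(q <- s | P q) phi * a q * I1 (bb q) (vv q) (ee q) x.

Lemma I1_meas q : P q -> measurable_fun `[(0:R), (1:R)]%classic (I1 (bb q) (vv q) (ee q)).
Proof.
move=> Pq; have [_ [_ hv]] := hq _ Pq; have [l hl] := I1_indic (bb q) _ (ee q) hv.
rewrite (_ : I1 _ _ _ = \1_([set` `]l, l + ee q[%R])); last by apply/funext.
apply: measurable_indic; exact: measurable_itv.
Qed.

Lemma I1_ge0 b v e x : 0 <= I1 b v e x :> R.
Proof. by rewrite /I1; case: ifP. Qed.

Lemma Fs_nil : Fs [::] = (fun x => f x * K).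
Proof. by apply/funext => x; rewrite /Fs big_nil addr0. Qed.

Lemma Fs_cons q s : Fs (q :: s) =
  if P q then (fun x => phi * a q * I1 (bb q) (vv q) (ee q) x + Fs s x) else Fs s.
Proof.
by apply/funext => x; rewrite /Fs big_cons; case: (P q) => //; rewrite addrCA.
Qed.

Lemma Fs_meas s : measurable_fun `[(0:R), (1:R)]%classic (Fs s).
Proof.
elim: s => [|q s IH]; first by rewrite Fs_nil; exact: (measurable_funM mf (measurable_cst K)).
rewrite Fs_cons; case Pq: (P q) => //.
have h1 := measurable_funM (measurable_cst (phi * a q)) (I1_meas q Pq).
exact: (measurable_funD h1 IH).
Qed.

Lemma Fs_ge0 s x : x \in `[(0:R), (1:R)] -> 0 <= Fs s x.
Proof.
move=> x01; have /andP[f0 fphi] := fb _ x01.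
have phi0 : 0 <= phi := le_trans f0 fphi.
rewrite /Fs; apply: addr_ge0; first exact: mulr_ge0.
apply: sumr_ge0 => q Pq; have [a0 _] := hq _ Pq.
by rewrite mulr_ge0 ?mulr_ge0 ?I1_ge0.
Qed.

Lemma Fs_int s : (\int[lebesgue_measure]_(x in `[0%R, 1%R]%classic) (Fs s x)%:E
   <= (K + \sum_(q <- s | P q) a q * phi * ee q)%:E)%E.
Proof.
elim: s => [|q s IH].
  rewrite Fs_nil big_nil addr0.
  under eq_integral => x _ do rewrite EFinM.
  rewrite ge0_integralZr //.
  - by rewrite f1 mul1e.
  - by apply/measurable_EFinP; exact: mf.
  - by move=> x /inset01 x01; apply: ge0E; have /andP[] := fb _ x01.
rewrite Fs_cons big_cons; case Pq: (P q); last exact: IH.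
have [a0 [e0 hv]] := hq _ Pq.
under eq_integral => x _ do rewrite EFinD.
rewrite ge0_integralD //; first last.
- by apply/measurable_EFinP; exact: Fs_meas.
- by move=> x /inset01 x01; apply: ge0E; exact: Fs_ge0.
- apply/measurable_EFinP.
  exact: (measurable_funM (measurable_cst (phi * a q)) (I1_meas q Pq)).
- move=> x /inset01 x01; have /andP[f0 fphi] := fb _ x01.
  by apply: ge0E; rewrite mulr_ge0 ?mulr_ge0 ?I1_ge0 // (le_trans f0 fphi).
rewrite [(K + _)%R]addrCA EFinD; apply: leeD; last exact: IH.
have [l hl] := I1_indic (bb q) _ (ee q) hv.
under eq_integral => x _ do rewrite hl.
rewrite (_ : a q * phi = phi * a q); last by rewrite mulrC.
apply: int_indic_le => //.
by rewrite mulr_ge0 // (le_trans _ (proj2 (andP (fb 0 _)))) ?(proj1 (andP (fb 0 _))) // in_itv /= lexx ler01.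
Qed.
End OneDim.

End PB.
Import PB.

Module PC.
Local Open Scope classical_set_scope.
Local Open Scope ring_scope.

Record atom (R : Type) := Atom { aa : R; bb : R; vv : nat -> R; pp : nat; ee : R }.
Arguments Atom {R}.
Arguments aa {R}. Arguments bb {R}. Arguments vv {R}. Arguments pp {R}. Arguments ee {R}.

Section Key.
Variable R : realType.
Implicit Types (t : atom R) (w : seq R).

Definition ev t w : R := bb t + \sum_(0 <= j < size w) vv t j * nth 0 w j.
Definition Ind t w : R := if (0 < ev t w) && (ev t w < ee t) then 1 else 0.
Definition shift (x : R) t : atom R :=
  Atom (aa t) (bb t + vv t 0 * x) (fun j => vv t j.+1) (pp t).-1 (ee t).
Definition good (L : nat) t : Prop :=
  0 <= aa t /\ 0 <= ee t /\
  (aa t != 0 -> (vv t (pp t) = 1 \/ vv t (pp t) = -1) /\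
     (forall j, (pp t < j)%N -> vv t j = 0) /\ (pp t < L)%N).
Definition goodf (phi : R) (f : R -> R) : Prop :=
  measurable_fun `[(0:R), (1:R)]%classic f /\
  (forall x, x \in `[(0:R), (1:R)] -> 0 <= f x <= phi) /\
  (\int[lebesgue_measure]_(x in `[0%R, 1%R]%classic) (f x)%:E = 1)%E.
Definition inbox w := forall j, (j < size w)%N -> 0 <= nth 0 w j <= 1.

Lemma ev_cons x t w : ev t (x :: w) = ev (shift x t) w.
Proof.
rewrite /ev /= big_nat_recl //= -addrA; congr (_ + _).
Qed.

Lemma Ind_cons x t w : Ind t (x :: w) = Ind (shift x t) w.
Proof. by rewrite /Ind ev_cons. Qed.

Lemma Ind_ge0 t w : 0 <= Ind t w.
Proof. by rewrite /Ind; case: ifP. Qed.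

Lemma ev_p0 x t w : (forall j, (0 < j)%N -> vv t j = 0) ->
  ev t (x :: w) = bb t + vv t 0 * x.
Proof.
move=> h; rewrite ev_cons /ev /=; rewrite big1_seq ?addr0 // => j _.
by rewrite h // mul0r.
Qed.


Definition zatom : atom R := Atom 0 0 (fun _ => 0) 0 0.

Lemma key (phi : R) (fs : seq (R -> R)) : List.Forall (goodf phi) fs ->
  forall (I : finType) (ts : I -> atom R) (g : seq R -> \bar R) (c : R),
  0 <= c -> (forall q, good (size fs) (ts q)) ->
  (forall w, size w = size fs -> inbox w ->
     (g w <= (c + \sum_q aa (ts q) * Ind (ts q) w)%:E)%E) ->
  (iter_expect fs g <= (c + \sum_q aa (ts q) * phi * ee (ts q))%:E)%E.
Proof.
elim: fs => [|f fs IH] Hf I ts g c c0 hts hg /=.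
  have a0 q : aa (ts q) = 0.
    have [_ [_ h]] := hts q; apply/eqP; apply: contraT => /h [_ [_]].
    by rewrite ltn0.
  have ib : inbox [::] by move=> j; rewrite ltn0.
  have := hg [::] erefl ib.
  by rewrite !big1 ?addr0 // => q _; rewrite a0 !mul0r.
inversion Hf as [|? ? [mf [fb f1]] Hfs]; subst.
pose P q := (aa (ts q) != 0) && (pp (ts q) == 0)%N.
pose K := c + \sum_(q | ~~ P q) aa (ts q) * phi * ee (ts q).
have phi0 : 0 <= phi.
  have /andP[h1 h2] := fb 0 (ltac:(by rewrite in_itv /= lexx ler01)).
  exact: le_trans h1 h2.
have K0 : 0 <= K.
  rewrite /K addr_ge0 // sumr_ge0 // => q _; have [h1 [h2 _]] := hts q.
  by rewrite mulr_ge0 // mulr_ge0.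
pose ts' x q := if P q then zatom else shift x (ts q).
pose I1q x q := I1 (bb (ts q)) (vv (ts q) 0) (ee (ts q)) x.
have hP q : P q -> (vv (ts q) 0 = 1 \/ vv (ts q) 0 = -1) /\ (forall j, (0 < j)%N -> vv (ts q) j = 0).
  move=> /andP[an /eqP p0]; have [_ [_ h]] := hts q; have [h1 [h2 _]] := h an.
  by rewrite -p0; split => // j; rewrite -p0; exact: h2.
have S1 x : \sum_q aa (ts' x q) * phi * ee (ts' x q) =
    \sum_(q | ~~ P q) aa (ts q) * phi * ee (ts q).
  rewrite (bigID P) /= big1 ?add0r; last by move=> q Pq; rewrite /ts' Pq /= !mul0r.
  by apply: eq_bigr => q /negbTE nP; rewrite /ts' nP.
have S2 x w : \sum_q aa (ts q) * Ind (ts q) (x :: w) =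
    \sum_(q | P q) aa (ts q) * I1q x q + \sum_q aa (ts' x q) * Ind (ts' x q) w.
  rewrite (bigID P) /=; congr (_ + _).
    apply: eq_bigr => q Pq; congr (_ * _).
    by rewrite /Ind /I1q /I1 ev_p0 //; have [] := hP q Pq.
  rewrite [RHS](bigID P) /= [X in _ = X + _]big1 ?add0r; last first.
    by move=> q Pq; rewrite /ts' Pq /= mul0r.
  by apply: eq_bigr => q /negbTE nP; rewrite /ts' nP Ind_cons.
have hG x : x \in `[(0:R), (1:R)] ->
   (iter_expect fs (fun ws => g (x :: ws)) <=
    (K + \sum_(q | P q) aa (ts q) * I1q x q)%:E)%E.
  move=> x01.
  have c'0 : 0 <= c + \sum_(q | P q) aa (ts q) * I1q x q.
    rewrite addr_ge0 // sumr_ge0 // => q _; have [h1 _] := hts q.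
    by rewrite mulr_ge0 // /I1q /I1; case: ifP.
  have := IH Hfs I (ts' x) (fun ws => g (x :: ws)) _ c'0.
  rewrite S1 /K -addrA [(_ + \sum_(q | ~~ P q) _)%R]addrC addrA; apply.
    move=> q; rewrite /ts'; case: ifP => Pq.
      by rewrite /good /= lexx eqxx.
    have [h1 [h2 h3]] := hts q; split => //; split => //= an.
    have [h4 [h5 h6]] := h3 an.
    have pn : pp (ts q) != 0%N by move: Pq; rewrite /P an /=; move/negbT.
    case: (pp (ts q)) pn h4 h5 h6 => [//|p] _ h4 h5 h6 /=.
    split => //; split => [j hj|]; first by apply: h5.
    by rewrite -ltnS.
  move=> w sw ibw.
  have := hg (x :: w) (ltac:(by rewrite /= sw)) _.
  rewrite S2 addrA; apply.
  move=> [|j] /=; first by rewrite in_itv /= in x01.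
  by rewrite ltnS; exact: ibw.
have hq' : forall q, P q -> 0 <= aa (ts q) /\ 0 <= ee (ts q) /\
    (vv (ts q) 0 = 1 \/ vv (ts q) 0 = -1).
  move=> q Pq; have [h1 [h2 _]] := hts q; split => //; split => //.
  by have [] := hP q Pq.
pose Fs' := @Fs R f phi K I P (fun q => aa (ts q)) (fun q => bb (ts q))
   (fun q => vv (ts q) 0) (fun q => ee (ts q)) (index_enum I).
apply: (@le_trans _ _ (\int[lebesgue_measure]_(x in `[0%R, 1%R]%classic) (Fs' x)%:E)%E).
  apply: le_integral_any => x /inset01 x01.
  have /andP[fx0 fxphi] := fb x x01.
  apply: le_trans; first by apply: lee_wpmul2l; [exact: ge0E | exact: hG].
  rewrite -EFinM lee_fin /Fs' /Fs mulrDr lerD2l mulr_sumr; apply: ler_sum => q Pq.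
  rewrite /I1q mulrA; apply: ler_wpM2r; first by rewrite /I1; case: ifP.
  by apply: ler_wpM2r => //; have [] := hq' q Pq.
apply: le_trans; first exact: (@Fs_int R f phi K mf fb f1 K0 I P _ _ _ _ hq' (index_enum I)).
rewrite /K -addrA [X in (_ <= (c + X)%:E)%E](bigID P) /= [X in (_ <= (c + X)%:E)%E]addrC.
by [].
Qed.
End Key.

End PC.
Import PC.

Module PD.
Local Open Scope ring_scope.

Lemma cardc (T : finType) (P : pred T) : #|[set x | P x]%classic| = #|P|.
Proof. apply: eq_card => x. by rewrite /in_mem /= /in_set /= asboolb. Qed.

Section Comb.
Variables (n : nat).
Implicit Types (a u : assignment n) (c : clause n).

Lemma sat_split a x c : clause_sat a c =
  has (fun l : literal n => (l.1 != x) && lit_sat a l) c || ((x, a x) \in c).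
Proof.
elim: c => //= l c IH; rewrite IH in_cons.
case: l => y bl; rewrite /lit_sat /= xpair_eqE.
case: (eqVneq x y) => [<-|ne] /=; rewrite ?eqxx //=.
  by case: (a x == bl); case: has; case: (_ \in _).
by rewrite orbA.
Qed.

Definition sigma x (b : bool) c : int :=
  if ((x, b) \in c) && ((x, ~~ b) \notin c) then 1
  else if ((x, ~~ b) \in c) && ((x, b) \notin c) then -1 else 0.

Lemma flip_sat u u' x c : (forall j, j != x -> u' j = u j) -> u x = ~~ u' x ->
  clause_sat u' c != clause_sat u c ->
  ((clause_sat u' c)%:Z - (clause_sat u c)%:Z = sigma x (u' x) c).
Proof.
move=> eqj ux; rewrite (sat_split u' x) (sat_split u x) ux.
have -> : has (fun l : literal n => (l.1 != x) && lit_sat u' l) c =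
          has (fun l : literal n => (l.1 != x) && lit_sat u l) c.
  by apply: eq_has => l; rewrite /lit_sat; case: eqP => //= /eqP ne; rewrite eqj.
rewrite /sigma.
case: has; case: ((x, u' x) \in c); case: ((x, ~~ u' x) \in c) => //.
Qed.


Lemma weight_diff (R : realType) m (C : 'I_m -> clause n) (w : 'I_m -> R) u u' x :
  (forall j, j != x -> u' j = u j) -> u x = ~~ u' x ->
  weight C w u' - weight C w u =
  \sum_(i in [set i | clause_sat u' (C i) != clause_sat u (C i)])
     (sigma x (u' x) (C i))%:~R * w i.
Proof.
move=> eqj ux; rewrite /weight !(big_mkcond (fun i => clause_sat _ _)) -sumrB.
rewrite (bigID (fun i => i \in [set i | clause_sat u' (C i) != clause_sat u (C i)])) /=.
rewrite [X in _ + X]big1 ?addr0; last first.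
  by move=> i; rewrite inE negbK => /eqP ->; rewrite subrr.
apply: eq_bigr => i; rewrite inE => hD.
have := @flip_sat u u' x (C i) eqj ux hD.
case: (clause_sat u' _) hD; case: (clause_sat u _) => //= _ <-.
  by rewrite subr0 mul1r.
by rewrite sub0r mulN1r.
Qed.


Lemma flip1_split u u' : flip1 u u' ->
  exists x, (forall j, j != x -> u' j = u j) /\ u x = ~~ u' x.
Proof.
rewrite /flip1 cardc -cardsE => /cards1P [x hx]; exists x; split.
  move=> j jx; have : j \notin [set j | u j != u' j] by rewrite hx finset.in_set1.
  by rewrite inE negbK => /eqP.
have : x \in [set j | u j != u' j] by rewrite hx finset.set11.
by rewrite inE; case: (u x); case: (u' x).
Qed.

Section Paths.
Variables (R : realType) (m : nat) (C : 'I_m -> clause n) (w : 'I_m -> R).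
Local Notation W := (weight C w).

Lemma path_min a0 s : path (improving C w) a0 s -> s != [::] ->
  exists u u', improving C w u u' /\
    (size s)%:R * (W u' - W u) <= W (last a0 s) - W a0.
Proof.
elim: s a0 => [//|u1 s IH] a0 /= /andP [h1 hp] _.
case: s IH hp => [|u2 s] IH hp.
  by exists a0, u1; split => //=; rewrite mul1r.
have [v [v' [hv hle]]] := IH u1 hp isT.
move: hle; rewrite [size (u2 :: s)]/= => hle.
have -> : ((size (u1 :: u2 :: s))%:R : R) = 1 + (size s).+1%:R by rewrite /= nat1r.
have S0 : (0 : R) <= (size s).+1%:R by [].
case: (leP (W u1 - W a0) (W v' - W v)) => hd.
  exists a0, u1; split => //.
  have := ler_wpM2l S0 hd; lra.
exists v, v'; split => //.
lra.
Qed.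

Lemma W_set a : W a = \sum_(i in [set i | clause_sat a (C i)]) w i.
Proof. by apply: eq_bigl => i; rewrite inE. Qed.

Lemma path_card a0 s : path (improving C w) a0 s -> (size s < 2 ^ m)%N.
Proof.
move=> hp.
pose S a := [set i | clause_sat a (C i)].
have hW : W =1 (fun A : {set 'I_m} => \sum_(i in A) w i) \o S by move=> a; rewrite W_set.
have hs : sorted (fun a b : R => a < b) (map W (a0 :: s)).
  rewrite /= path_map; apply: sub_path hp => a b /andP [_ h]; exact: h.
have hu : uniq (map W (a0 :: s)) by apply: (sorted_uniq _ _ hs); [exact: lt_trans|exact: ltxx].
rewrite (eq_map hW) map_comp in hu; have hu' := map_uniq hu.
have := elimT card_uniqP hu'; rewrite size_map /= => <-.
apply: (@leq_trans #|powerset [set: 'I_m]|).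
  apply: subset_leq_card; apply/fintype.subsetP => A _; by rewrite powersetE finset.subsetT.
by rewrite card_powerset cardsT card_ord.
Qed.

End Paths.

End Comb.

End PD.
Import PD.

Module PE.
Local Open Scope ring_scope.

Arguments sigma {n}.
Arguments path_min {n R m C w a0 s}. Arguments path_card {n R m C w a0 s}.
Arguments flip1_split {n u u'}. Arguments weight_diff {n R m C w u u' x}.
Arguments good {R}. Arguments ev {R}. Arguments Ind {R}. Arguments goodf {R}. Arguments inbox {R}.

Section Atoms.
Variables (R : realType) (n m : nat) (C : 'I_m -> clause n).

Definition Qt := ((('I_m.+1 * 'I_n) * bool) * {set 'I_m})%type.
Definition Nset (x : 'I_n) (b : bool) := [set i | sigma x b (C i) != 0].
Definition valid (q : Qt) := (0 < #|q.2|)%N && (q.2 \subset Nset q.1.1.2 q.1.2).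

Definition atom_of (q : Qt) : atom R :=
  let: (k, x, b, D) := q in
  if valid q then
    Atom (2 ^ k.+1)%:R 0
      (fun j => \sum_(i in D | val i == j) (sigma x b (C i))%:~R)
      (\max_(i in D) val i) ((2 * m)%:R / (2 ^ k)%:R)
  else zatom R.

Lemma sigma_pm (x : 'I_n) b (c : clause n) : sigma x b c != 0 ->
  ((sigma x b c)%:~R = 1 :> R) \/ ((sigma x b c)%:~R = -1 :> R).
Proof.
rewrite /sigma; case: ifP => _; first by left.
by case: ifP => _; [right|].
Qed.

Lemma good_atom q : good m (atom_of q).
Proof.
case: q => [[[k x] b] D]; rewrite /atom_of.
case: ifP => hv; last by rewrite /good /= lexx eqxx.
have /andP [DN DsubN] := hv.
split; first exact: ler0n.
split; first by rewrite divr_ge0 ?ler0n.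
move=> _ /=.
have [i0 i0D hmax] := eq_bigmax_cond (fun i : 'I_m => val i) DN.
rewrite hmax; split; [|split].
- rewrite (eq_bigl (fun i => i == i0)); last first.
    by move=> i; case: (eqVneq i i0) => [->|ne]; rewrite ?i0D ?eqxx // val_eqE (negbTE ne) andbF.
  rewrite big_pred1_eq; apply: sigma_pm.
  by have := fintype.subsetP DsubN i0 i0D; rewrite inE.
- move=> j hj; apply: big1 => i /andP [iD /eqP vi].
  have := @leq_bigmax_cond _ (fun i => i \in D) (fun i : 'I_m => val i) i iD.
  rewrite /= in hmax; rewrite hmax => h; move: hj; by rewrite -vi ltnNge h.
- exact: ltn_ord.
Qed.


Lemma vv_sum x b (D : {set 'I_m}) (j : 'I_m) :
  \sum_(i in D | val i == val j) ((sigma x b (C i))%:~R : R) =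
  if j \in D then (sigma x b (C j))%:~R else 0.
Proof.
case: ifP => jD.
  rewrite (eq_bigl (fun i => i == j)); first by rewrite big_pred1_eq.
  by move=> i; case: (eqVneq i j) => [->|ne]; rewrite ?jD ?eqxx // val_eqE (negbTE ne) andbF.
apply: big1 => i /andP [iD]; rewrite val_eqE => /eqP ij.
by move: jD; rewrite -ij iD.
Qed.

Lemma ev_atom k x b D (ws : seq R) : valid (k, x, b, D) -> size ws = m ->
  ev (atom_of (k, x, b, D)) ws =
  \sum_(i in D) (sigma x b (C i))%:~R * nth 0 ws i.
Proof.
move=> hv sz; rewrite /ev /atom_of hv /= add0r sz big_mkord.
rewrite [RHS]big_mkcond; apply: eq_bigr => j _.
rewrite vv_sum; case: ifP => //; by rewrite mul0r.
Qed.


Lemma term_le_sum (I : finType) (F : I -> R) q0 : (forall q, 0 <= F q) ->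
  F q0 <= \sum_q F q.
Proof.
move=> h; rewrite (bigD1 q0) //= lerDl; apply: sumr_ge0 => q _; exact: h.
Qed.

Lemma bracket (e : nat -> R) (d : R) N : e N <= d -> d < e 0%N ->
  exists k, (k < N)%N /\ e k.+1 <= d /\ d < e k.
Proof.
elim: N => [|N IH] h1 h2; first by move: (lt_le_trans h2 h1); rewrite ltxx.
case: (ltP d (e N)) => h3.
  by exists N; split.
have [k [hk hk2]] := IH h3 h2; exists k; split => //; exact: ltnW.
Qed.

Lemma W_bounds (w : 'I_m -> R) a : (forall i, 0 <= w i <= 1) ->
  0 <= weight C w a <= m%:R.
Proof.
move=> hw; apply/andP; split.
  by apply: sumr_ge0 => i _; have /andP [] := hw i.
rewrite /weight big_mkcond /=.
apply: (@le_trans _ _ (\sum_(i < m) (1 : R))); last by rewrite sumr_const card_ord.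
apply: ler_sum => i _; case: ifP => _; first by have /andP [] := hw i.
exact: ler01.
Qed.


Lemma pointwise (ws : seq R) : size ws = m -> inbox ws ->
  (max_iterations C (fun i : 'I_m => nth 0%R ws i) <=
    ((0 + \sum_q aa (atom_of q) * Ind (atom_of q) ws)%R)%:E)%E.
Proof.
move=> sz ib; set w := fun i : 'I_m => nth 0 ws i.
have hw i : 0 <= w i <= 1 by apply: ib; rewrite sz ltn_ord.
have F0 q : 0 <= aa (atom_of q) * Ind (atom_of q) ws.
  have [h _] := good_atom q; by rewrite mulr_ge0 // Ind_ge0.
have sum0 : 0 <= \sum_q aa (atom_of q) * Ind (atom_of q) ws by apply: sumr_ge0.
apply: ge_ereal_sup => _ [s [a0 hp] <-]; rewrite lee_fin add0r.
case: s hp => [|u1 s'] hp; first by [].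
set s := u1 :: s' in hp *.
have [u [u' [/andP [hflip hlt] hmin]]] := path_min hp isT.
set Dl := weight C w u' - weight C w u.
have Dl0 : 0 < Dl by rewrite subr_gt0.
have hWl := W_bounds w (last a0 s) hw; have hW0 := W_bounds w a0 hw.
have hsDl : (size s)%:R * Dl <= m%:R.
  apply: le_trans hmin _; move: hWl hW0 => /andP [_ h1] /andP [h2 _]; lra.
have [x [eqj ux]] := flip1_split hflip.
set b := u' x.
set D := [set i | clause_sat u' (C i) != clause_sat u (C i)].
have hDl : Dl = \sum_(i in D) (sigma x b (C i))%:~R * w i by exact: weight_diff.
have DN : D \subset Nset x b.
  apply/fintype.subsetP => i; rewrite !inE => hi.
  have := @flip_sat n u u' x (C i) eqj ux hi.
  by move: hi; case: (clause_sat u' _); case: (clause_sat u _) => //= _ <-.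
have D0 : (0 < #|D|)%N.
  case: (posnP #|D|) => // /cards0_eq hD; move: Dl0; rewrite hDl hD big_set0.
  by rewrite ltxx.
have hsz : (size s < 2 ^ m)%N := path_card hp.
have sz1 : (1 <= size s)%N by [].
have m0 : (0 < m)%N.
  case: (posnP m) => // m0; move: hsDl; rewrite m0.
  have : 0 < (size s)%:R * Dl by apply: mulr_gt0 => //; rewrite ltr0n.
  lra.
pose e (j : nat) : R := (2 * m)%:R / (2 ^ j)%:R.
suff [kk [hk1 hk2]] : exists kk : 'I_m.+1, Dl < e kk /\ (size s <= 2 ^ kk.+1)%N.
  pose q : Qt := (kk, x, b, D).
  have hv : valid q by rewrite /valid D0 DN.
  apply: (le_trans _ (@term_le_sum Qt _ q F0)).
  have -> : Ind (atom_of q) ws = 1.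
    rewrite /Ind ev_atom // -hDl.
    by rewrite /atom_of hv /= Dl0 hk1.
  by rewrite mulr1 /atom_of hv /= ler_nat.
have Dlm : Dl <= m%:R.
  apply: le_trans hsDl; rewrite -[X in X <= _]mul1r; apply: ler_wpM2r; first exact: ltW.
  by rewrite ler1n.
have mpos : (0 : R) < m%:R by rewrite ltr0n.
case: (ltP Dl (e m)) => hdm.
  exists ord_max; split => //=.
  by rewrite expnS; apply: leq_trans (ltnW hsz) _; rewrite leq_pmull.
have h0 : Dl < e 0%N by rewrite /e expn0 divr1 natrM; lra.
have [k [hk [hk1 hk2]]] := @bracket e Dl m hdm h0.
exists (Ordinal (leqW hk)); split => //=.
rewrite -(ler_nat R).
set P : R := (2 ^ k.+1)%:R.
have P0 : 0 < P by rewrite ltr0n expn_gt0.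
have hE : e k.+1 * P = 2 * m%:R by rewrite /e divfK ?natrM // gt_eqF.
have h1 : (size s)%:R * e k.+1 <= m%:R.
  by apply: le_trans hsDl; apply: ler_wpM2l.
have h2 := ler_wpM2r (ltW P0) h1; rewrite -mulrA hE in h2.
have s0 : (0 : R) <= (size s)%:R by [].
have h3 : m%:R * (2 * (size s)%:R) <= m%:R * P.
  apply: le_trans h2; rewrite le_eqVlt; apply/orP; left; apply/eqP; ring.
rewrite ler_pM2l // in h3; move: h3 s0; rewrite /s /= => h3 s0; lra.
Qed.

Lemma Nset_occ x b : (#|Nset x b| <= max_occ C)%N.
Proof.
apply: (@leq_trans #|[set i : 'I_m | x \in map fst (C i)]%classic|); last first.
  exact: (@leq_bigmax _ (fun x => #|[set i : 'I_m | x \in map fst (C i)]%classic|) x).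
rewrite cardc -cardsE; apply: subset_leq_card; apply/fintype.subsetP => i.
rewrite !inE /sigma => h; apply/mapP.
move: h; case: ifP => [/andP [h _] _|_]; first by exists (x, b).
by case: ifP => [/andP [h _] _|//]; exists (x, ~~ b).
Qed.

Lemma term_bound (phi : R) q : 0 <= phi ->
  aa (atom_of q) * phi * ee (atom_of q) <=
  (if q.2 \subset Nset q.1.1.2 q.1.2 then 4 * m%:R * phi else 0).
Proof.
move=> phi0; case: q => [[[k x] b] D] /=; rewrite /atom_of.
case: ifP => hv; last by case: ifP => _; rewrite /= !mul0r ?mulr_ge0 ?ler0n.
have /andP [_ ->] := hv; rewrite /= le_eqVlt; apply/orP; left; apply/eqP.
rewrite expnS natrM natrM; field.
by rewrite pnatr_eq0 expn_eq0.
Qed.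

Lemma total_bound (phi : R) : (0 < m)%N -> 0 <= phi ->
  \sum_q aa (atom_of q) * phi * ee (atom_of q) <=
  (16 * 2 ^ max_occ C * n * m ^ 2)%:R * phi.
Proof.
move=> m0 phi0.
apply: (@le_trans _ _ (\sum_(q : Qt) (if q.2 \subset Nset q.1.1.2 q.1.2 then 4 * m%:R * phi else 0))).
  by apply: ler_sum => q _; exact: term_bound.
rewrite -(pair_bigA _ (fun (a : ('I_m.+1 * 'I_n) * bool) (D : {set 'I_m}) =>
   if D \subset Nset a.1.2 a.2 then 4 * m%:R * phi else 0)) /=.
apply: (@le_trans _ _ (\sum_(a : ('I_m.+1 * 'I_n) * bool) (4 * m%:R * phi * (2 ^ max_occ C)%:R))).
  apply: ler_sum => -[[k x] b] _ /=.
  rewrite -big_mkcond /= sumr_const.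
  have -> : #|(fun D : {set 'I_m} => D \subset Nset x b)| = #|powerset (Nset x b)|.
    by apply: eq_card => D; rewrite powersetE.
  rewrite card_powerset -[X in X <= _]mulr_natr; apply: ler_wpM2l; first by rewrite ?mulr_ge0 ?ler0n.
  by rewrite ler_nat leq_pexp2l // Nset_occ.
rewrite sumr_const !card_prod !card_ord card_bool -mulr_natr.
set X := (2 ^ max_occ C)%N.
apply: (@le_trans _ _ ((8 * m * X * n * m.+1)%:R * phi)).
  by rewrite le_eqVlt; apply/orP; left; apply/eqP; rewrite !natrM; ring.
apply: ler_wpM2r => //; rewrite ler_nat.
have -> : (16 * X * n * m ^ 2 = 8 * m * X * n * (2 * m))%N by ring.
by rewrite leq_mul2l; apply/orP; right; lia.
Qed.

End Atoms.

End PE.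
Import PE.

Local Open Scope classical_set_scope.
Local Open Scope ring_scope.

Theorem mainTheorem9 :
  exists c : nat, forall (R : realType) (n m : nat) (C : 'I_m -> clause n)
    (f : 'I_m -> R -> R) (phi : R),
    (forall i, measurable_fun `[(0:R), (1:R)]%classic (f i)) ->
    (forall i x, x \in `[(0:R), (1:R)] -> 0 <= f i x <= phi) ->
    (forall i, (\int[lebesgue_measure]_(x in `[0%R, 1%R]%classic) (f i x)%:E
                 = 1)%E) ->
    (expected_max_iterations C f <=
       ((c * 2 ^ max_occ C * n * m ^ 2)%:R * phi)%:E)%E.
Proof.
exists 16%N => R n m C f phi mf fb f1.
rewrite /expected_max_iterations.
have Hf : List.Forall (goodf phi) [seq f i | i <- enum 'I_m].
  elim: (enum 'I_m) => //= i s IH; constructor => //.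
  by split; [exact: mf|split; [exact: fb|exact: f1]].
have szf : size [seq f i | i <- enum 'I_m] = m by rewrite size_map size_enum_ord.
have KK := (@key R phi _ Hf (Qt n m) (@atom_of R n m C)
            (fun ws => max_iterations C (fun i : 'I_m => nth 0%R ws i)) 0 (lexx _)).
have K1 : forall q : Qt n m, good (size [seq f i | i <- enum 'I_m]) (atom_of R n m C q).
  by move=> q; rewrite szf; exact: good_atom.
have K2 := KK K1 (fun w sz ib => @pointwise R n m C w (etrans sz szf) ib).
apply: le_trans K2 _.
rewrite add0r lee_fin.
case: (posnP m) => m0.
  have -> : (16 * 2 ^ max_occ C * n * m ^ 2 = 0)%N by rewrite [in (m ^ 2)%N]m0 expnS mul0n muln0.
  rewrite mul0r big1 // => -[[[k x] b] D] _.
  rewrite /atom_of; case: ifP => hv; last by rewrite /= !mul0r.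
  exfalso; move: hv; rewrite /valid /= => /andP [hD _].
  have h : (#|D| <= m)%N by rewrite -[X in (_ <= X)%N](card_ord m) max_card.
  have : (#|D| <= 0)%N by apply: leq_trans h _; rewrite leqn0; apply/eqP.
  by rewrite leqn0 => /eqP h0; move: hD; rewrite h0.
have phi0 : 0 <= phi.
  have /andP [h1 h2] := fb (Ordinal m0) 0 (ltac:(by rewrite in_itv /= lexx ler01)).
  exact: le_trans h1 h2.
exact: total_bound.
Qed.
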